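(* Let $(\theta,\varphi,m\colon C_2\to C_1)$ be an involutive-2-link in a category $\mathcal{C}$. Then $(\theta,\varphi,m)$ arises from an internal groupoid (i.e., there is an internal groupoid $(C_0,C_1,C_2,d,c,e,m,\pi_1,\pi_2,i)$ with this same $m$ such that $\theta=\langle i\pi_1,m\rangle$ and $\varphi=\langle m,i\pi_2\rangle$) if and only if all of the following hold: (1) the pairs $(m,m\theta)$ and $(m,m\varphi)$ are each jointly monomorphic; (2) there exist morphisms $e_1,e_2\colon C_1\to C_2$ such that $me_1=1_{C_1}=me_2$; $\theta e_2=e_2$ and $\varphi e_1=e_1$; $m\theta\varphi e_2=m\varphi\theta e_1$; $m\theta e_1 m\varphi=m\varphi e_2 m\theta$; $m\theta e_1 m=m\theta e_1 m\theta$ and $m\varphi e_2 m=m\varphi e_2 m\varphi$; (3) writing $\pi_1=m\varphi$ and $\pi_2=m\theta$, the pair $(\pi_1,\pi_2)$ is bi-exact, i.e. there exist an object $C_0$ and morphisms $d,c\colon C_1\to C_0$ with $d\pi_1=c\pi_2$ such that this square is both a pullback and a pushout, and there exist an object $C_3$ and morphisms $p_1,p_2\colon C_3\to C_2$ with $\pi_2p_1=\pi_1p_2$ such that this square is both a pullback and a pushout; (4) there exist morphisms $m_1,m_2\colon C_3\to C_2$ with $\pi_1m_1=mp_1$, $\pi_2m_1=\pi_2p_2$, $\pi_1m_2=\pi_1p_1$, $\pi_2m_2=mp_2$ (these are unique since $(\pi_1,\pi_2)$ is jointly monomorphic), and they satisfy $mm_1=mm_2$.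
   Context: No limits or colimits are assumed to exist in $\mathcal{C}$; pullbacks and pushouts are properties of commutative squares. A pair of morphisms with common domain is jointly monomorphic if any two morphisms into that domain agreeing after composition with each of them are equal. Notation: for $x,y\colon X\to C_1$ with $dx=cy$, $\langle x,y\rangle\colon X\to C_2$ is the unique morphism with $\pi_1\langle x,y\rangle=x$, $\pi_2\langle x,y\rangle=y$. Internal groupoid in a category $\mathcal{C}$: objects $C_0,C_1,C_2$ and morphisms $d,c\colon C_1\to C_0$, $e\colon C_0\to C_1$, $m,\pi_1,\pi_2\colon C_2\to C_1$, $i\colon C_1\to C_1$ such that: $de=1_{C_0}=ce$; $dm=d\pi_2$, $cm=c\pi_1$, $d\pi_1=c\pi_2$; $di=c$, $ci=d$, $i^2=1_{C_1}$, $ie=e$; the commutative square $d\pi_1=c\pi_2$ is a pullback square; $m\langle 1_{C_1},ed\rangle=1_{C_1}=m\langle ec,1_{C_1}\rangle$; $m\langle 1_{C_1},i\rangle=ec$ and $m\langle i,1_{C_1}\rangle=ed$; the cospan $d\pi_2\colon C_2\to C_0$, $c\colon C_1\to C_0$ can be completed to a pullback square $d\pi_2 p_1=c\,p_2$ with $p_1\colon C_3\to C_2$, $p_2\colon C_3\to C_1$; and $m(1\times m)=m(m\times 1)$, where $m\times 1=\langle mp_1,p_2\rangle$ and $1\times m=\langle \pi_1p_1, m\langle\pi_2p_1,p_2\rangle\rangle$. Involutive-2-link: a triple $(\theta,\varphi,m)$ where $m\colon A\to B$ is a morphism and $\theta,\varphi\colon A\to A$ satisfy $\theta^2=\varphi^2=1_A$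 and $\theta\varphi\theta=\varphi\theta\varphi$, and such that $m,m\theta,m\varphi\colon A\to B$ are jointly monomorphic. *)

(* Defs.v *)
Set Implicit Arguments.
Unset Strict Implicit.

Record Category := {
  Ob :> Type;
  Hom : Ob -> Ob -> Type;
  idm : forall A, Hom A A;
  comp : forall A B C, Hom B C -> Hom A B -> Hom A C;
  comp_assoc : forall A B C D (h : Hom C D) (g : Hom B C) (f : Hom A B),
      comp h (comp g f) = comp (comp h g) f;
  comp_id_l : forall A B (f : Hom A B), comp (idm B) f = f;
  comp_id_r : forall A B (f : Hom A B), comp f (idm A) = f
}.

Arguments Hom {c} _ _.
Arguments idm {c} _.
Arguments comp {c A B C} _ _.

Notation "g ∘ f" := (comp g f) (at level 40, left associativity).

Section Notions.
Context {C : Category}.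

Definition is_pullback {P X Y Z : C}
  (a : Hom P X) (b : Hom P Y) (f : Hom X Z) (g : Hom Y Z) : Prop :=
  f ∘ a = g ∘ b /\
  forall (W : C) (x : Hom W X) (y : Hom W Y), f ∘ x = g ∘ y ->
    exists u : Hom W P, (a ∘ u = x /\ b ∘ u = y) /\
      forall u' : Hom W P, a ∘ u' = x -> b ∘ u' = y -> u' = u.

Definition is_pushout {P X Y Z : C}
  (a : Hom P X) (b : Hom P Y) (f : Hom X Z) (g : Hom Y Z) : Prop :=
  f ∘ a = g ∘ b /\
  forall (W : C) (x : Hom X W) (y : Hom Y W), x ∘ a = y ∘ b ->
    exists u : Hom Z W, (u ∘ f = x /\ u ∘ g = y) /\
      forall u' : Hom Z W, u' ∘ f = x -> u' ∘ g = y -> u' = u.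

Definition jointly_mono2 {A B B' : C} (f : Hom A B) (g : Hom A B') : Prop :=
  forall (W : C) (x y : Hom W A), f ∘ x = f ∘ y -> g ∘ x = g ∘ y -> x = y.

Definition jointly_mono3 {A B1 B2 B3 : C}
  (f : Hom A B1) (g : Hom A B2) (h : Hom A B3) : Prop :=
  forall (W : C) (x y : Hom W A),
    f ∘ x = f ∘ y -> g ∘ x = g ∘ y -> h ∘ x = h ∘ y -> x = y.

Definition involutive_2_link {A B : C}
  (theta phi : Hom A A) (m : Hom A B) : Prop :=
  theta ∘ theta = idm A /\ phi ∘ phi = idm A /\
  theta ∘ phi ∘ theta = phi ∘ theta ∘ phi /\
  jointly_mono3 m (m ∘ theta) (m ∘ phi).

(* Since the square
   d pi1 = c pi2 is required to be a pullback, the pairing <x,y> : X -> C2 is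
   the unique morphism with pi1 <x,y> = x, pi2 <x,y> = y; each axiom of the
   form "m <x,y> = z" is stated as "every u with pi1 u = x, pi2 u = y
   satisfies m u = z" (such u exists and is unique by the pullback). *)
Definition is_internal_groupoid {C0 C1 C2 : C}
  (d c : Hom C1 C0) (e : Hom C0 C1) (m pi1 pi2 : Hom C2 C1) (i : Hom C1 C1)
  : Prop :=
  d ∘ e = idm C0 /\ c ∘ e = idm C0 /\
  d ∘ m = d ∘ pi2 /\ c ∘ m = c ∘ pi1 /\ d ∘ pi1 = c ∘ pi2 /\
  d ∘ i = c /\ c ∘ i = d /\ i ∘ i = idm C1 /\ i ∘ e = e /\
  is_pullback pi1 pi2 d c /\
  (forall u : Hom C1 C2, pi1 ∘ u = idm C1 -> pi2 ∘ u = e ∘ d -> m ∘ u = idm C1) /\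
  (forall u : Hom C1 C2, pi1 ∘ u = e ∘ c -> pi2 ∘ u = idm C1 -> m ∘ u = idm C1) /\
  (forall u : Hom C1 C2, pi1 ∘ u = idm C1 -> pi2 ∘ u = i -> m ∘ u = e ∘ c) /\
  (forall u : Hom C1 C2, pi1 ∘ u = i -> pi2 ∘ u = idm C1 -> m ∘ u = e ∘ d) /\
  (* the cospan d pi2, c completes to a pullback d pi2 p1 = c p2, and
     m (1 x m) = m (m x 1) *)
  exists (C3 : C) (p1 : Hom C3 C2) (p2 : Hom C3 C1),
    is_pullback p1 p2 (d ∘ pi2) c /\
    forall (mx1 b onexm : Hom C3 C2),
      pi1 ∘ mx1 = m ∘ p1 -> pi2 ∘ mx1 = p2 ->
      (* b = <pi2 p1, p2> *)
      pi1 ∘ b = pi2 ∘ p1 -> pi2 ∘ b = p2 ->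
      (* onexm = 1 x m = <pi1 p1, m b> *)
      pi1 ∘ onexm = pi1 ∘ p1 -> pi2 ∘ onexm = m ∘ b ->
      m ∘ onexm = m ∘ mx1.

Definition arises_from_internal_groupoid {C1 C2 : C}
  (theta phi : Hom C2 C2) (m : Hom C2 C1) : Prop :=
  exists (C0 : C) (d c : Hom C1 C0) (e : Hom C0 C1) (pi1 pi2 : Hom C2 C1)
         (i : Hom C1 C1),
    is_internal_groupoid d c e m pi1 pi2 i /\
    (pi1 ∘ theta = i ∘ pi1 /\ pi2 ∘ theta = m) /\
    (pi1 ∘ phi = m /\ pi2 ∘ phi = i ∘ pi2).

End Notions.

(* Main.v *)
Require Import Defs.

Section Helpers.
Context {C : Category}.

Lemma pw {B D E : C} {f : Hom D E} {g : Hom B D} {k : Hom B E} :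
  f ∘ g = k -> forall X (x : Hom X B), f ∘ (g ∘ x) = k ∘ x.
Proof. intros H X x. rewrite comp_assoc, H. reflexivity. Qed.

Lemma inv2 {A : C} (f : Hom A A) : f ∘ f = idm A -> forall X (x : Hom X A), f ∘ (f ∘ x) = x.
Proof. intros H X x. rewrite comp_assoc, H, comp_id_l. reflexivity. Qed.

Lemma pb_ex {P X Y Z : C} {a : Hom P X} {b : Hom P Y} {f : Hom X Z} {g : Hom Y Z} :
  is_pullback a b f g -> forall W (x : Hom W X) (y : Hom W Y), f ∘ x = g ∘ y ->
  exists u, a ∘ u = x /\ b ∘ u = y.
Proof. intros [_ H] W x y Hxy. destruct (H W x y Hxy) as [u [Hu _]]. eauto. Qed.

Lemma pb_uniq {P X Y Z : C} {a : Hom P X} {b : Hom P Y} {f : Hom X Z} {g : Hom Y Z} :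
  is_pullback a b f g -> forall W (u v : Hom W P), a ∘ u = a ∘ v -> b ∘ u = b ∘ v -> u = v.
Proof.
  intros [Hc H] W u v H1 H2.
  destruct (H W (a ∘ u) (b ∘ u)) as [w [_ Hw]].
  { rewrite !comp_assoc, Hc. reflexivity. }
  rewrite (Hw u eq_refl eq_refl), (Hw v (eq_sym H1) (eq_sym H2)). reflexivity.
Qed.

Lemma pb_comm {P X Y Z : C} {a : Hom P X} {b : Hom P Y} {f : Hom X Z} {g : Hom Y Z} :
  is_pullback a b f g -> forall W (x : Hom W P), f ∘ (a ∘ x) = g ∘ (b ∘ x).
Proof. intros [Hc _] W x. rewrite !comp_assoc, Hc. reflexivity. Qed.

Lemma po_ex {P X Y Z : C} {a : Hom P X} {b : Hom P Y} {f : Hom X Z} {g : Hom Y Z} :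
  is_pushout a b f g -> forall W (x : Hom X W) (y : Hom Y W), x ∘ a = y ∘ b ->
  exists u, u ∘ f = x /\ u ∘ g = y.
Proof. intros [_ H] W x y Hxy. destruct (H W x y Hxy) as [u [Hu _]]. eauto. Qed.

Lemma po_uniq {P X Y Z : C} {a : Hom P X} {b : Hom P Y} {f : Hom X Z} {g : Hom Y Z} :
  is_pushout a b f g -> forall W (u v : Hom Z W), u ∘ f = v ∘ f -> u ∘ g = v ∘ g -> u = v.
Proof.
  intros [Hc H] W u v H1 H2.
  destruct (H W (u ∘ f) (u ∘ g)) as [w [_ Hw]].
  { rewrite <- !comp_assoc, Hc. reflexivity. }
  rewrite (Hw u eq_refl eq_refl), (Hw v (eq_sym H1) (eq_sym H2)). reflexivity.
Qed.
End Helpers.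

Ltac norm := repeat rewrite <- comp_assoc; repeat rewrite comp_id_l; repeat rewrite comp_id_r.

Lemma fwd (C : Category) (C1 C2 : C)
  (theta phi : Hom C2 C2) (m : Hom C2 C1) :
  involutive_2_link theta phi m ->
  arises_from_internal_groupoid theta phi m ->
   (jointly_mono2 m (m ∘ theta) /\ jointly_mono2 m (m ∘ phi)) /\
   (exists e1 e2 : Hom C1 C2,
      m ∘ e1 = idm C1 /\ m ∘ e2 = idm C1 /\
      theta ∘ e2 = e2 /\ phi ∘ e1 = e1 /\
      m ∘ theta ∘ phi ∘ e2 = m ∘ phi ∘ theta ∘ e1 /\
      m ∘ theta ∘ e1 ∘ m ∘ phi = m ∘ phi ∘ e2 ∘ m ∘ theta /\
      m ∘ theta ∘ e1 ∘ m = m ∘ theta ∘ e1 ∘ m ∘ theta /\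
      m ∘ phi ∘ e2 ∘ m = m ∘ phi ∘ e2 ∘ m ∘ phi) /\
   (exists (C0 : C) (d c : Hom C1 C0),
      is_pullback (m ∘ phi) (m ∘ theta) d c /\
      is_pushout (m ∘ phi) (m ∘ theta) d c) /\
   (exists (C3 : C) (p1 p2 : Hom C3 C2),
      is_pullback p1 p2 (m ∘ theta) (m ∘ phi) /\
      is_pushout p1 p2 (m ∘ theta) (m ∘ phi) /\
      exists m1 m2 : Hom C3 C2,
        m ∘ phi ∘ m1 = m ∘ p1 /\ m ∘ theta ∘ m1 = m ∘ theta ∘ p2 /\
        m ∘ phi ∘ m2 = m ∘ phi ∘ p1 /\ m ∘ theta ∘ m2 = m ∘ p2 /\
        m ∘ m1 = m ∘ m2).
Proof.
  intros [Htt [Hpp [Hbraid Hjm3]]]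
    [C0 [d [c [e [pi1 [pi2 [i [Hg [[Ht1 Ht2] [Hp1 Hp2]]]]]]]]]].
  destruct Hg as [Hde [Hce [Hdm [Hcm [Hsq [Hdi [Hci [Hii [Hie [Hpb [Hu1 [Hu2
    [Hu3 [Hu4 [C3 [q1 [q2 [Hpb3 Hassoc]]]]]]]]]]]]]]]]]].
  assert (Emp : m ∘ phi = pi1)
    by (rewrite <- Hp1, <- comp_assoc, Hpp, comp_id_r; reflexivity).
  assert (Emt : m ∘ theta = pi2)
    by (rewrite <- Ht2, <- comp_assoc, Htt, comp_id_r; reflexivity).
  pose proof (pw Ht1) as Ht1'. pose proof (pw Ht2) as Ht2'.
  pose proof (pw Hp1) as Hp1'. pose proof (pw Hp2) as Hp2'.
  pose proof (pw Emp) as Emp'. pose proof (pw Emt) as Emt'.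
  pose proof (pw Hsq) as Hsq'. pose proof (pw Hdm) as Hdm'. pose proof (pw Hcm) as Hcm'.
  pose proof (pw Hde) as Hde'. pose proof (pw Hce) as Hce'. pose proof (pw Hie) as Hie'.
  destruct (pb_ex Hpb C1 (idm C1) (e ∘ d)) as [e1 [He1a He1b]].
  { rewrite comp_id_r, comp_assoc, Hce, comp_id_l. reflexivity. }
  destruct (pb_ex Hpb C1 (e ∘ c) (idm C1)) as [e2 [He2a He2b]].
  { rewrite comp_id_r, comp_assoc, Hde, comp_id_l. reflexivity. }
  pose proof (pw He1a) as He1a'. pose proof (pw He1b) as He1b'.
  pose proof (pw He2a) as He2a'. pose proof (pw He2b) as He2b'.
  assert (Hme1 : m ∘ e1 = idm C1) by (apply Hu1; assumption).
  assert (Hme2 : m ∘ e2 = idm C1) by (apply Hu2; assumption).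
  pose proof (pw Hme1) as Hme1'. pose proof (pw Hme2) as Hme2'.
  split; [|split; [|split]].
  - rewrite Emt, Emp. split.
    + intros W x y H1 H2.
      assert (E : phi ∘ (theta ∘ x) = phi ∘ (theta ∘ y)).
      { apply (pb_uniq Hpb).
        - rewrite !Hp1', !Emt'. exact H2.
        - rewrite !Hp2'. norm. rewrite !Ht2', H1. reflexivity. }
      apply (f_equal (fun z => theta ∘ (phi ∘ z))) in E. cbv beta in E.
      rewrite !(inv2 _ Hpp), !(inv2 _ Htt) in E. exact E.
    + intros W x y H1 H2.
      assert (E : theta ∘ (phi ∘ x) = theta ∘ (phi ∘ y)).
      { apply (pb_uniq Hpb).
        - rewrite !Ht1'. norm. rewrite !Hp1', H1. reflexivity.
        - rewrite !Ht2', !Emp'. exact H2. }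
      apply (f_equal (fun z => phi ∘ (theta ∘ z))) in E. cbv beta in E.
      rewrite !(inv2 _ Htt), !(inv2 _ Hpp) in E. exact E.
  - exists e1, e2. repeat split; try assumption.
    + apply (pb_uniq Hpb).
      * repeat progress (norm; rewrite ?Ht1', ?He2a', ?He2a, ?Hie', ?Hie).
        reflexivity.
      * rewrite Ht2', Hme2, He2b. reflexivity.
    + apply (pb_uniq Hpb).
      * rewrite Hp1', Hme1, He1a. reflexivity.
      * repeat progress (norm; rewrite ?Hp2', ?He1b', ?He1b, ?Hie', ?Hie).
        reflexivity.
    + repeat progress (norm; rewrite ?Emt', ?Emp', ?Hp2', ?Ht1', ?He2b, ?He1a).
      reflexivity.
    + repeat progress (norm; rewrite ?Emt', ?Emp', ?Emp, ?Emt, ?He1b', ?He2a', ?Hsq', ?Hsq).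
      reflexivity.
    + repeat progress (norm; rewrite ?Emt', ?Emt, ?He1b', ?Hdm', ?Hdm).
      reflexivity.
    + repeat progress (norm; rewrite ?Emp', ?Emp, ?He2a', ?Hcm', ?Hcm).
      reflexivity.
  - exists C0, d, c. rewrite Emp, Emt. split; [exact Hpb|].
    split; [exact Hsq|]. intros W x y Hxy.
    pose proof (pw Hxy) as Hxy'.
    assert (A1 : x = y ∘ (e ∘ d)).
    { transitivity (x ∘ (pi1 ∘ e1)). rewrite He1a, comp_id_r; reflexivity.
      rewrite Hxy', <- comp_assoc, He1b. reflexivity. }
    destruct (pb_ex Hpb C0 e e) as [z [Hz1 Hz2]].
    { rewrite Hde, Hce. reflexivity. }
    assert (A2 : x ∘ e = y ∘ e).
    { transitivity (x ∘ (pi1 ∘ z)). rewrite Hz1; reflexivity.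
      rewrite Hxy', <- comp_assoc, Hz2. reflexivity. }
    assert (A3 : x ∘ (e ∘ c) = y).
    { rewrite <- He2a, Hxy', <- comp_assoc, He2b, comp_id_r. reflexivity. }
    exists (x ∘ e). split; [split|].
    + rewrite A2, <- comp_assoc, <- A1. reflexivity.
    + rewrite <- comp_assoc. exact A3.
    + intros u' H1 H2. rewrite <- H1, <- comp_assoc, Hde, comp_id_r. reflexivity.
  - destruct (pb_ex Hpb C3 (pi2 ∘ q1) q2) as [r [Hr1 Hr2]].
    { rewrite comp_assoc. exact (proj1 Hpb3). }
    pose proof (pw Hr1) as Hr1'. pose proof (pw Hr2) as Hr2'.
    assert (HP3 : is_pullback q1 r pi2 pi1).
    { split; [symmetry; exact Hr1|].
      intros W x y Hxy.
      destruct (proj2 Hpb3 W x (pi2 ∘ y)) as [w [[Hw1 Hw2] Hwu]].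
      { rewrite <- comp_assoc, Hxy, comp_assoc, Hsq, <- comp_assoc. reflexivity. }
      exists w. split; [split|].
      - exact Hw1.
      - apply (pb_uniq Hpb).
        + rewrite Hr1', <- comp_assoc, Hw1. exact Hxy.
        + rewrite Hr2'. exact Hw2.
      - intros u' H1 H2. apply Hwu; [exact H1|].
        rewrite <- H2, <- Hr2'. reflexivity. }
    exists C3, q1, r. rewrite Emp, Emt.
    split; [exact HP3|]. split.
    + split; [symmetry; exact Hr1|]. intros W x y Hxy.
      assert (T : forall (w : Hom C2 C3) a b, q1 ∘ w = a -> r ∘ w = b -> x ∘ a = y ∘ b).
      { intros w a b Ha Hb. rewrite <- Ha, <- Hb, !comp_assoc, Hxy. reflexivity. }
      destruct (pb_ex HP3 C2 (idm C2) (e1 ∘ pi2)) as [w1 [Hw1a Hw1b]].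
      { rewrite comp_id_r, He1a', comp_id_l. reflexivity. }
      destruct (pb_ex HP3 C2 (e2 ∘ pi2) (e1 ∘ pi2)) as [w2 [Hw2a Hw2b]].
      { rewrite He1a', He2b', comp_id_l. reflexivity. }
      destruct (pb_ex HP3 C2 (e2 ∘ pi1) (idm C2)) as [w3 [Hw3a Hw3b]].
      { rewrite comp_id_r, He2b', comp_id_l. reflexivity. }
      pose proof (T w1 _ _ Hw1a Hw1b) as E1. rewrite comp_id_r in E1.
      pose proof (T w2 _ _ Hw2a Hw2b) as E2.
      pose proof (T w3 _ _ Hw3a Hw3b) as E3. rewrite comp_id_r in E3.
      exists (x ∘ e2). split; [split|].
      * rewrite <- comp_assoc, E2, <- E1. reflexivity.
      * rewrite <- comp_assoc. exact E3.
      * intros u' H1 H2. rewrite <- H1, <- comp_assoc, He2b, comp_id_r. reflexivity.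
    + destruct (pb_ex Hpb C3 (m ∘ q1) (pi2 ∘ r)) as [m1 [Hm1a Hm1b]].
      { rewrite Hdm', <- comp_assoc, <- Hr1, Hsq', <- comp_assoc. reflexivity. }
      destruct (pb_ex Hpb C3 (pi1 ∘ q1) (m ∘ r)) as [m2 [Hm2a Hm2b]].
      { rewrite Hsq', Hcm', <- !comp_assoc, Hr1. reflexivity. }
      exists m1, m2. repeat split; try assumption.
      symmetry. apply (Hassoc m1 r m2); try assumption.
      * rewrite Hm1b. exact Hr2.
Qed.

Lemma pw3 {C : Category} {A B D E : C} {f : Hom D E} {g : Hom A D} {h : Hom B A} {k : Hom B E} :
  f ∘ (g ∘ h) = k -> forall X (x : Hom X B), f ∘ (g ∘ (h ∘ x)) = k ∘ x.
Proof. intros H X x. rewrite (comp_assoc g h), comp_assoc, H. reflexivity. Qed.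


Lemma bwd (C : Category) (C1 C2 : C)
  (theta phi : Hom C2 C2) (m : Hom C2 C1) :
  involutive_2_link theta phi m ->
   (jointly_mono2 m (m ∘ theta) /\ jointly_mono2 m (m ∘ phi)) /\
   (exists e1 e2 : Hom C1 C2,
      m ∘ e1 = idm C1 /\ m ∘ e2 = idm C1 /\
      theta ∘ e2 = e2 /\ phi ∘ e1 = e1 /\
      m ∘ theta ∘ phi ∘ e2 = m ∘ phi ∘ theta ∘ e1 /\
      m ∘ theta ∘ e1 ∘ m ∘ phi = m ∘ phi ∘ e2 ∘ m ∘ theta /\
      m ∘ theta ∘ e1 ∘ m = m ∘ theta ∘ e1 ∘ m ∘ theta /\
      m ∘ phi ∘ e2 ∘ m = m ∘ phi ∘ e2 ∘ m ∘ phi) /\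
   (exists (C0 : C) (d c : Hom C1 C0),
      is_pullback (m ∘ phi) (m ∘ theta) d c /\
      is_pushout (m ∘ phi) (m ∘ theta) d c) /\
   (exists (C3 : C) (p1 p2 : Hom C3 C2),
      is_pullback p1 p2 (m ∘ theta) (m ∘ phi) /\
      is_pushout p1 p2 (m ∘ theta) (m ∘ phi) /\
      exists m1 m2 : Hom C3 C2,
        m ∘ phi ∘ m1 = m ∘ p1 /\ m ∘ theta ∘ m1 = m ∘ theta ∘ p2 /\
        m ∘ phi ∘ m2 = m ∘ phi ∘ p1 /\ m ∘ theta ∘ m2 = m ∘ p2 /\
        m ∘ m1 = m ∘ m2) ->
  arises_from_internal_groupoid theta phi m.
Proof.
  intros [Htt [Hpp _]] [[Jt Jp] [HE [HC0 HC3]]].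
  destruct HE as [e1 [e2 [Hme1 [Hme2 [Hte2 [Hpe1 [Hi [Huv [Hu Hv]]]]]]]]].
  destruct HC0 as [C0 [d [c [Hpb Hpo]]]].
  destruct HC3 as [C3 [p1 [p2 [H3pb [_ [m1 [m2 [Hm1a [Hm1b [Hm2a [Hm2b Hmm]]]]]]]]]]].
  assert (F3 : forall X (x : Hom X C2),
    m ∘ theta ∘ (e1 ∘ (m ∘ phi ∘ x)) = m ∘ phi ∘ (e2 ∘ (m ∘ theta ∘ x))).
  { intros. rewrite !comp_assoc. f_equal. exact Huv. }
  assert (F4 : forall X (x : Hom X C2),
    m ∘ theta ∘ (e1 ∘ (m ∘ x)) = m ∘ theta ∘ (e1 ∘ (m ∘ theta ∘ x))).
  { intros. rewrite !comp_assoc. f_equal. exact Hu. }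
  assert (F5 : forall X (x : Hom X C2),
    m ∘ phi ∘ (e2 ∘ (m ∘ x)) = m ∘ phi ∘ (e2 ∘ (m ∘ phi ∘ x))).
  { intros. rewrite !comp_assoc. f_equal. exact Hv. }
  assert (Hi' : m ∘ phi ∘ (theta ∘ e1) = m ∘ theta ∘ (phi ∘ e2)).
  { rewrite !comp_assoc. symmetry. exact Hi. }
  clear Huv Hu Hv Hi.
  remember (m ∘ phi) as pi1 eqn:Ep1 in *.
  remember (m ∘ theta) as pi2 eqn:Ep2 in *.
  assert (EP1 : m ∘ phi = pi1) by (symmetry; exact Ep1).
  assert (EP2 : m ∘ theta = pi2) by (symmetry; exact Ep2).
  assert (Hp1 : pi1 ∘ phi = m)
    by (rewrite Ep1, <- comp_assoc, Hpp, comp_id_r; reflexivity).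
  assert (Hp2 : pi2 ∘ theta = m)
    by (rewrite Ep2, <- comp_assoc, Htt, comp_id_r; reflexivity).
  assert (F1 : pi1 ∘ e1 = idm C1)
    by (rewrite Ep1, <- comp_assoc, Hpe1; exact Hme1).
  assert (F2 : pi2 ∘ e2 = idm C1)
    by (rewrite Ep2, <- comp_assoc, Hte2; exact Hme2).
  pose proof (pw EP1) as EP1'. pose proof (pw EP2) as EP2'.
  pose proof (pw Hp1) as Hp1'. pose proof (pw Hp2) as Hp2'.
  pose proof (pw F1) as F1'. pose proof (pw F2) as F2'.
  pose proof (pw Hme1) as Hme1'. pose proof (pw Hme2) as Hme2'.
  pose proof (pw Hte2) as Hte2'. pose proof (pw Hpe1) as Hpe1'.
  assert (Hsq : d ∘ pi1 = c ∘ pi2) by exact (proj1 Hpb).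
  pose proof (pw Hsq) as Hsq'.
  clear Ep1 Ep2.
  destruct (ex_intro (fun j => pi2 ∘ (phi ∘ e2) = j) _ eq_refl) as [i Ei2].
  assert (Ei1 : pi1 ∘ (theta ∘ e1) = i) by (rewrite Hi'; exact Ei2).
  pose proof (pw3 Ei1) as Ei1'. pose proof (pw3 Ei2) as Ei2'.
  destruct (po_ex Hpo C1 (pi2 ∘ e1) (pi1 ∘ e2)) as [e [Hed Hec]].
  { rewrite <- !comp_assoc. specialize (F3 _ (idm C2)). rewrite !comp_id_r in F3.
    exact F3. }
  assert (HU : pi2 ∘ e1 = e ∘ d) by (symmetry; exact Hed).
  assert (HV : pi1 ∘ e2 = e ∘ c) by (symmetry; exact Hec).
  pose proof (pw HU) as HU'. pose proof (pw HV) as HV'.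
  assert (K1 : c ∘ (e ∘ d) = d).
  { pose proof (Hsq' _ e1) as K. repeat progress (repeat rewrite <- comp_assoc in K; repeat rewrite comp_id_l in K; repeat rewrite comp_id_r in K; rewrite ?EP1', ?EP2', ?EP1, ?EP2, ?Hp1', ?Hp2', ?Hp1, ?Hp2, ?F1', ?F2', ?F1, ?F2, ?Hme1', ?Hme2', ?Hme1, ?Hme2, ?Hte2', ?Hpe1', ?Hte2, ?Hpe1, ?Ei1', ?Ei2', ?Ei1, ?Ei2, ?HU', ?HV', ?HU, ?HV in K). symmetry; exact K. }
  assert (UU : e ∘ (d ∘ (e ∘ d)) = e ∘ d).
  { pose proof (F4 _ e1) as K. repeat progress (repeat rewrite <- comp_assoc in K; repeat rewrite comp_id_l in K; repeat rewrite comp_id_r in K; rewrite ?EP1', ?EP2', ?EP1, ?EP2, ?Hp1', ?Hp2', ?Hp1, ?Hp2, ?F1', ?F2', ?F1, ?F2, ?Hme1', ?Hme2', ?Hme1, ?Hme2, ?Hte2', ?Hpe1', ?Hte2, ?Hpe1, ?Ei1', ?Ei2', ?Ei1, ?Ei2, ?HU', ?HV', ?HU, ?HV in K). symmetry; exact K. }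
  assert (K2 : d ∘ (e ∘ d) = d).
  { pose proof (Hsq' _ (e1 ∘ (e ∘ d))) as K. repeat progress (repeat rewrite <- comp_assoc in K; repeat rewrite comp_id_l in K; repeat rewrite comp_id_r in K; rewrite ?EP1', ?EP2', ?EP1, ?EP2, ?Hp1', ?Hp2', ?Hp1, ?Hp2, ?F1', ?F2', ?F1, ?F2, ?Hme1', ?Hme2', ?Hme1, ?Hme2, ?Hte2', ?Hpe1', ?Hte2, ?Hpe1, ?Ei1', ?Ei2', ?Ei1, ?Ei2, ?HU', ?HV', ?HU, ?HV in K). rewrite UU, K1 in K. exact K. }
  assert (K3 : d ∘ (e ∘ c) = c).
  { pose proof (Hsq' _ e2) as K. repeat progress (repeat rewrite <- comp_assoc in K; repeat rewrite comp_id_l in K; repeat rewrite comp_id_r in K; rewrite ?EP1', ?EP2', ?EP1, ?EP2, ?Hp1', ?Hp2', ?Hp1, ?Hp2, ?F1', ?F2', ?F1, ?F2, ?Hme1', ?Hme2', ?Hme1, ?Hme2, ?Hte2', ?Hpe1', ?Hte2, ?Hpe1, ?Ei1', ?Ei2', ?Ei1, ?Ei2, ?HU', ?HV', ?HU, ?HV in K). exact K. }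
  assert (VV : e ∘ (c ∘ (e ∘ c)) = e ∘ c).
  { pose proof (F5 _ e2) as K. repeat progress (repeat rewrite <- comp_assoc in K; repeat rewrite comp_id_l in K; repeat rewrite comp_id_r in K; rewrite ?EP1', ?EP2', ?EP1, ?EP2, ?Hp1', ?Hp2', ?Hp1, ?Hp2, ?F1', ?F2', ?F1, ?F2, ?Hme1', ?Hme2', ?Hme1, ?Hme2, ?Hte2', ?Hpe1', ?Hte2, ?Hpe1, ?Ei1', ?Ei2', ?Ei1, ?Ei2, ?HU', ?HV', ?HU, ?HV in K). symmetry; exact K. }
  assert (K4 : c ∘ (e ∘ c) = c).
  { pose proof (Hsq' _ (e2 ∘ (e ∘ c))) as K. repeat progress (repeat rewrite <- comp_assoc in K; repeat rewrite comp_id_l in K; repeat rewrite comp_id_r in K; rewrite ?EP1', ?EP2', ?EP1, ?EP2, ?Hp1', ?Hp2', ?Hp1, ?Hp2, ?F1', ?F2', ?F1, ?F2, ?Hme1', ?Hme2', ?Hme1, ?Hme2, ?Hte2', ?Hpe1', ?Hte2, ?Hpe1, ?Ei1', ?Ei2', ?Ei1, ?Ei2, ?HU', ?HV', ?HU, ?HV in K). rewrite VV, K3 in K.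
    symmetry; exact K. }
  assert (Hde : d ∘ e = idm C0).
  { apply (po_uniq Hpo); rewrite <- comp_assoc, comp_id_l; assumption. }
  assert (Hce : c ∘ e = idm C0).
  { apply (po_uniq Hpo); rewrite <- comp_assoc, comp_id_l; assumption. }
  pose proof (pw Hde) as Hde'. pose proof (pw Hce) as Hce'.
  assert (mono_e : forall X (a b : Hom X C0), e ∘ a = e ∘ b -> a = b).
  { intros X a b H. rewrite <- (comp_id_l a), <- (comp_id_l b), <- Hde,
      <- !comp_assoc, H. reflexivity. }
  assert (Hdm : d ∘ m = d ∘ pi2).
  { apply mono_e. pose proof (F4 _ (idm C2)) as K. rewrite !comp_id_r in K.
    rewrite !comp_assoc, <- HU, <- !comp_assoc. exact K. }
  assert (Hcm : c ∘ m = c ∘ pi1).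
  { apply mono_e. pose proof (F5 _ (idm C2)) as K. rewrite !comp_id_r in K.
    rewrite !comp_assoc, <- HV, <- !comp_assoc. exact K. }
  assert (Hdi : d ∘ i = c).
  { pose proof (Hsq' _ (theta ∘ e1)) as K. repeat progress (repeat rewrite <- comp_assoc in K; repeat rewrite comp_id_l in K; repeat rewrite comp_id_r in K; rewrite ?EP1', ?EP2', ?EP1, ?EP2, ?Hp1', ?Hp2', ?Hp1, ?Hp2, ?F1', ?F2', ?F1, ?F2, ?Hme1', ?Hme2', ?Hme1, ?Hme2, ?Hte2', ?Hpe1', ?Hte2, ?Hpe1, ?Ei1', ?Ei2', ?Ei1, ?Ei2, ?HU', ?HV', ?HU, ?HV in K). exact K. }
  assert (Hci : c ∘ i = d).
  { pose proof (Hsq' _ (phi ∘ e2)) as K. repeat progress (repeat rewrite <- comp_assoc in K; repeat rewrite comp_id_l in K; repeat rewrite comp_id_r in K; rewrite ?EP1', ?EP2', ?EP1, ?EP2, ?Hp1', ?Hp2', ?Hp1, ?Hp2, ?F1', ?F2', ?F1, ?F2, ?Hme1', ?Hme2', ?Hme1, ?Hme2, ?Hte2', ?Hpe1', ?Hte2, ?Hpe1, ?Ei1', ?Ei2', ?Ei1, ?Ei2, ?HU', ?HV', ?HU, ?HV in K). symmetry; exact K. }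
  pose proof (pw Hdm) as Hdm'. pose proof (pw Hcm) as Hcm'.
  pose proof (pw Hdi) as Hdi'. pose proof (pw Hci) as Hci'.
  assert (Hie : i ∘ e = e).
  { assert (E : theta ∘ (e1 ∘ e) = e1 ∘ e).
    { apply Jt; repeat progress (norm; rewrite ?EP1', ?EP2', ?EP1, ?EP2, ?Hp1', ?Hp2', ?Hp1, ?Hp2, ?F1', ?F2', ?F1, ?F2, ?Hme1', ?Hme2', ?Hme1, ?Hme2, ?Hte2', ?Hpe1', ?Hte2, ?Hpe1, ?Ei1', ?Ei2', ?Ei1, ?Ei2, ?HU', ?HV', ?HU, ?HV); rewrite ?Hde', ?Hde; norm; reflexivity. }
    rewrite <- (Ei1' _ e), E, F1', comp_id_l. reflexivity. }
  assert (Hii : i ∘ i = idm C1).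
  { assert (E : theta ∘ (e1 ∘ i) = phi ∘ e2).
    { apply Jt; repeat progress (norm; rewrite ?EP1', ?EP2', ?EP1, ?EP2, ?Hp1', ?Hp2', ?Hp1, ?Hp2, ?F1', ?F2', ?F1, ?F2, ?Hme1', ?Hme2', ?Hme1, ?Hme2, ?Hte2', ?Hpe1', ?Hte2, ?Hpe1, ?Ei1', ?Ei2', ?Ei1, ?Ei2, ?HU', ?HV', ?HU, ?HV); rewrite ?Hdi', ?Hdi; norm; reflexivity. }
    rewrite <- (Ei1' _ i), E, Hp1', Hme2. reflexivity. }
  exists C0, d, c, e, pi1, pi2, i.
  split; [|split].
  - split. exact Hde. split. exact Hce. split. exact Hdm. split. exact Hcm.
    split. exact Hsq. split. exact Hdi. split. exact Hci. split. exact Hii.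
    split. exact Hie. split. exact Hpb.
    split.
    { intros u H1 H2. assert (u = e1) as ->.
      { apply (pb_uniq Hpb); rewrite ?H1, ?H2, ?F1, ?HU; reflexivity. }
      exact Hme1. }
    split.
    { intros u H1 H2. assert (u = e2) as ->.
      { apply (pb_uniq Hpb); rewrite ?H1, ?H2, ?F2, ?HV; reflexivity. }
      exact Hme2. }
    split.
    { intros u H1 H2. assert (u = phi ∘ e2) as ->.
      { apply (pb_uniq Hpb); rewrite ?H1, ?H2; repeat progress (norm; rewrite ?EP1', ?EP2', ?EP1, ?EP2, ?Hp1', ?Hp2', ?Hp1, ?Hp2, ?F1', ?F2', ?F1, ?F2, ?Hme1', ?Hme2', ?Hme1, ?Hme2, ?Hte2', ?Hpe1', ?Hte2, ?Hpe1, ?Ei1', ?Ei2', ?Ei1, ?Ei2, ?HU', ?HV', ?HU, ?HV); reflexivity. }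
      repeat progress (norm; rewrite ?EP1', ?EP2', ?EP1, ?EP2, ?Hp1', ?Hp2', ?Hp1, ?Hp2, ?F1', ?F2', ?F1, ?F2, ?Hme1', ?Hme2', ?Hme1, ?Hme2, ?Hte2', ?Hpe1', ?Hte2, ?Hpe1, ?Ei1', ?Ei2', ?Ei1, ?Ei2, ?HU', ?HV', ?HU, ?HV). reflexivity. }
    split.
    { intros u H1 H2. assert (u = theta ∘ e1) as ->.
      { apply (pb_uniq Hpb); rewrite ?H1, ?H2; repeat progress (norm; rewrite ?EP1', ?EP2', ?EP1, ?EP2, ?Hp1', ?Hp2', ?Hp1, ?Hp2, ?F1', ?F2', ?F1, ?F2, ?Hme1', ?Hme2', ?Hme1, ?Hme2, ?Hte2', ?Hpe1', ?Hte2, ?Hpe1, ?Ei1', ?Ei2', ?Ei1, ?Ei2, ?HU', ?HV', ?HU, ?HV); reflexivity. }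
      repeat progress (norm; rewrite ?EP1', ?EP2', ?EP1, ?EP2, ?Hp1', ?Hp2', ?Hp1, ?Hp2, ?F1', ?F2', ?F1, ?F2, ?Hme1', ?Hme2', ?Hme1, ?Hme2, ?Hte2', ?Hpe1', ?Hte2, ?Hpe1, ?Ei1', ?Ei2', ?Ei1, ?Ei2, ?HU', ?HV', ?HU, ?HV). reflexivity. }
    exists C3, p1, (pi2 ∘ p2). split.
    + split.
      { rewrite <- comp_assoc, (proj1 H3pb), comp_assoc, Hsq, <- comp_assoc.
        reflexivity. }
      intros W x y Hxy.
      destruct (pb_ex Hpb W (pi2 ∘ x) y) as [z [Hz1 Hz2]].
      { rewrite comp_assoc. exact Hxy. }
      destruct (proj2 H3pb W x z) as [w [[Hw1 Hw2] Hwu]].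
      { symmetry. exact Hz1. }
      exists w. split; [split|].
      * exact Hw1.
      * rewrite <- comp_assoc, Hw2. exact Hz2.
      * intros u' H1 H2. apply Hwu; [exact H1|]. apply (pb_uniq Hpb).
        -- rewrite comp_assoc, <- (proj1 H3pb), <- comp_assoc, H1, Hz1. reflexivity.
        -- rewrite Hz2, comp_assoc. exact H2.
    + intros mx1 b onexm H1 H2 H3 H4 H5 H6.
      assert (b = p2) as ->.
      { apply (pb_uniq Hpb). rewrite H3. exact (proj1 H3pb). exact H4. }
      assert (mx1 = m1) as ->.
      { apply (pb_uniq Hpb). rewrite H1, Hm1a. reflexivity. rewrite H2, Hm1b.
        reflexivity. }
      assert (onexm = m2) as ->.
      { apply (pb_uniq Hpb). rewrite H5, Hm2a. reflexivity. rewrite H6, Hm2b.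
        reflexivity. }
      symmetry. exact Hmm.
  - pose proof (pw Hm1a) as Hm1a'. pose proof (pw Hm1b) as Hm1b'.
    pose proof (pw Hm2a) as Hm2a'. pose proof (pw Hm2b) as Hm2b'.
    destruct (pb_ex Hpb C2 (i ∘ pi1) m) as [X [Hx1 Hx2]].
    { rewrite comp_assoc, Hdi, Hcm. reflexivity. }
    destruct (pb_ex H3pb C2 (theta ∘ (e1 ∘ pi1)) (idm C2)) as [y [Hy1 Hy2]].
    { repeat progress (norm; rewrite ?EP1', ?EP2', ?EP1, ?EP2, ?Hp1', ?Hp2', ?Hp1, ?Hp2, ?F1', ?F2', ?F1, ?F2, ?Hme1', ?Hme2', ?Hme1, ?Hme2, ?Hte2', ?Hpe1', ?Hte2, ?Hpe1, ?Ei1', ?Ei2', ?Ei1, ?Ei2, ?HU', ?HV', ?HU, ?HV). reflexivity. }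
    assert (E1 : m1 ∘ y = e2 ∘ pi2).
    { apply (pb_uniq Hpb).
      - rewrite Hm1a'. norm. rewrite Hy1. repeat progress (norm; rewrite ?EP1', ?EP2', ?EP1, ?EP2, ?Hp1', ?Hp2', ?Hp1, ?Hp2, ?F1', ?F2', ?F1, ?F2, ?Hme1', ?Hme2', ?Hme1, ?Hme2, ?Hte2', ?Hpe1', ?Hte2, ?Hpe1, ?Ei1', ?Ei2', ?Ei1, ?Ei2, ?HU', ?HV', ?HU, ?HV). rewrite ?Hsq, ?Hsq'; norm; reflexivity.
      - rewrite Hm1b'. norm. rewrite Hy2. repeat progress (norm; rewrite ?EP1', ?EP2', ?EP1, ?EP2, ?Hp1', ?Hp2', ?Hp1, ?Hp2, ?F1', ?F2', ?F1, ?F2, ?Hme1', ?Hme2', ?Hme1, ?Hme2, ?Hte2', ?Hpe1', ?Hte2, ?Hpe1, ?Ei1', ?Ei2', ?Ei1, ?Ei2, ?HU', ?HV', ?HU, ?HV). reflexivity. }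
    assert (E2 : m2 ∘ y = X).
    { apply (pb_uniq Hpb).
      - rewrite Hm2a'. norm. rewrite Hy1. repeat progress (norm; rewrite ?EP1', ?EP2', ?EP1, ?EP2, ?Hp1', ?Hp2', ?Hp1, ?Hp2, ?F1', ?F2', ?F1, ?F2, ?Hme1', ?Hme2', ?Hme1, ?Hme2, ?Hte2', ?Hpe1', ?Hte2, ?Hpe1, ?Ei1', ?Ei2', ?Ei1, ?Ei2, ?HU', ?HV', ?HU, ?HV). symmetry; exact Hx1.
      - rewrite Hm2b'. norm. rewrite Hy2, Hx2, comp_id_r. reflexivity. }
    assert (mX : m ∘ X = pi2).
    { rewrite <- E2, comp_assoc, <- Hmm, <- comp_assoc, E1. repeat progress (norm; rewrite ?EP1', ?EP2', ?EP1, ?EP2, ?Hp1', ?Hp2', ?Hp1, ?Hp2, ?F1', ?F2', ?F1, ?F2, ?Hme1', ?Hme2', ?Hme1, ?Hme2, ?Hte2', ?Hpe1', ?Hte2, ?Hpe1, ?Ei1', ?Ei2', ?Ei1, ?Ei2, ?HU', ?HV', ?HU, ?HV). reflexivity. }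
    assert (Eth : theta = X).
    { apply Jt. rewrite EP2, mX. reflexivity. rewrite Hp2, Hx2. reflexivity. }
    split. rewrite Eth. exact Hx1. exact Hp2.
  - pose proof (pw Hm1a) as Hm1a'. pose proof (pw Hm1b) as Hm1b'.
    pose proof (pw Hm2a) as Hm2a'. pose proof (pw Hm2b) as Hm2b'.
    destruct (pb_ex Hpb C2 m (i ∘ pi2)) as [X [Hx1 Hx2]].
    { rewrite Hdm, comp_assoc, Hci. reflexivity. }
    destruct (pb_ex H3pb C2 (idm C2) (phi ∘ (e2 ∘ pi2))) as [y [Hy1 Hy2]].
    { repeat progress (norm; rewrite ?EP1', ?EP2', ?EP1, ?EP2, ?Hp1', ?Hp2', ?Hp1, ?Hp2, ?F1', ?F2', ?F1, ?F2, ?Hme1', ?Hme2', ?Hme1, ?Hme2, ?Hte2', ?Hpe1', ?Hte2, ?Hpe1, ?Ei1', ?Ei2', ?Ei1, ?Ei2, ?HU', ?HV', ?HU, ?HV). reflexivity. }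
    assert (E1 : m1 ∘ y = X).
    { apply (pb_uniq Hpb).
      - rewrite Hm1a'. norm. rewrite Hy1, Hx1, comp_id_r. reflexivity.
      - rewrite Hm1b'. norm. rewrite Hy2. repeat progress (norm; rewrite ?EP1', ?EP2', ?EP1, ?EP2, ?Hp1', ?Hp2', ?Hp1, ?Hp2, ?F1', ?F2', ?F1, ?F2, ?Hme1', ?Hme2', ?Hme1, ?Hme2, ?Hte2', ?Hpe1', ?Hte2, ?Hpe1, ?Ei1', ?Ei2', ?Ei1, ?Ei2, ?HU', ?HV', ?HU, ?HV). symmetry; exact Hx2. }
    assert (E2 : m2 ∘ y = e1 ∘ pi1).
    { apply (pb_uniq Hpb).
      - rewrite Hm2a'. norm. rewrite Hy1. repeat progress (norm; rewrite ?EP1', ?EP2', ?EP1, ?EP2, ?Hp1', ?Hp2', ?Hp1, ?Hp2, ?F1', ?F2', ?F1, ?F2, ?Hme1', ?Hme2', ?Hme1, ?Hme2, ?Hte2', ?Hpe1', ?Hte2, ?Hpe1, ?Ei1', ?Ei2', ?Ei1, ?Ei2, ?HU', ?HV', ?HU, ?HV). reflexivity.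
      - rewrite Hm2b'. norm. rewrite Hy2. repeat progress (norm; rewrite ?EP1', ?EP2', ?EP1, ?EP2, ?Hp1', ?Hp2', ?Hp1, ?Hp2, ?F1', ?F2', ?F1, ?F2, ?Hme1', ?Hme2', ?Hme1, ?Hme2, ?Hte2', ?Hpe1', ?Hte2, ?Hpe1, ?Ei1', ?Ei2', ?Ei1, ?Ei2, ?HU', ?HV', ?HU, ?HV). rewrite ?Hsq, ?Hsq'; norm; reflexivity. }
    assert (mX : m ∘ X = pi1).
    { rewrite <- E1, comp_assoc, Hmm, <- comp_assoc, E2. repeat progress (norm; rewrite ?EP1', ?EP2', ?EP1, ?EP2, ?Hp1', ?Hp2', ?Hp1, ?Hp2, ?F1', ?F2', ?F1, ?F2, ?Hme1', ?Hme2', ?Hme1, ?Hme2, ?Hte2', ?Hpe1', ?Hte2, ?Hpe1, ?Ei1', ?Ei2', ?Ei1, ?Ei2, ?HU', ?HV', ?HU, ?HV). reflexivity. }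
    assert (Eph : phi = X).
    { apply Jp. rewrite EP1, mX. reflexivity. rewrite Hp1, Hx1. reflexivity. }
    split. exact Hp1. rewrite Eph. exact Hx2.
Qed.

Theorem theorem5p3 (C : Category) (C1 C2 : C)
  (theta phi : Hom C2 C2) (m : Hom C2 C1) :
  involutive_2_link theta phi m ->
  (arises_from_internal_groupoid theta phi m <->
   (* (1) *)
   (jointly_mono2 m (m ∘ theta) /\ jointly_mono2 m (m ∘ phi)) /\
   (* (2) *)
   (exists e1 e2 : Hom C1 C2,
      m ∘ e1 = idm C1 /\ m ∘ e2 = idm C1 /\
      theta ∘ e2 = e2 /\ phi ∘ e1 = e1 /\
      m ∘ theta ∘ phi ∘ e2 = m ∘ phi ∘ theta ∘ e1 /\
      m ∘ theta ∘ e1 ∘ m ∘ phi = m ∘ phi ∘ e2 ∘ m ∘ theta /\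
      m ∘ theta ∘ e1 ∘ m = m ∘ theta ∘ e1 ∘ m ∘ theta /\
      m ∘ phi ∘ e2 ∘ m = m ∘ phi ∘ e2 ∘ m ∘ phi) /\
   (* (3) with pi1 = m phi, pi2 = m theta: (pi1, pi2) is bi-exact *)
   (exists (C0 : C) (d c : Hom C1 C0),
      is_pullback (m ∘ phi) (m ∘ theta) d c /\
      is_pushout (m ∘ phi) (m ∘ theta) d c) /\
   (exists (C3 : C) (p1 p2 : Hom C3 C2),
      is_pullback p1 p2 (m ∘ theta) (m ∘ phi) /\
      is_pushout p1 p2 (m ∘ theta) (m ∘ phi) /\
      (* (4) *)
      exists m1 m2 : Hom C3 C2,
        m ∘ phi ∘ m1 = m ∘ p1 /\ m ∘ theta ∘ m1 = m ∘ theta ∘ p2 /\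
        m ∘ phi ∘ m2 = m ∘ phi ∘ p1 /\ m ∘ theta ∘ m2 = m ∘ p2 /\
        m ∘ m1 = m ∘ m2)).
Proof.
  intros H. split.
  - apply fwd. exact H.
  - apply bwd. exact H.
Qed.
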